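(* Let $G_n$, $T$ and $\gamma$ be as in the context, and let $C$ be a directed cycle in $T$, with $|C|$ its number of arcs. Then $|C|$ divides $n+1$. Moreover, for every vertex $u$ of $C$, $u\gamma(u)=l(C)^{\frac{n+1}{|C|}}$, where $l(C)$ is the label of $C$ traversed as a closed walk starting at the out-neighbour of $u$ in $C$ (so that its last arc is the arc of $C$ leaving $u$), and $l(C)^j$ denotes the concatenation of $j$ copies of $l(C)$.
   Context: Let $A$ be a finite alphabet with a linear order $<$, extended to the lexicographic order on words. Let $\mathcal{F}$ be a set of words over $A$ (forbidden words). A word $w$ is in the language if the bi-infinite periodic sequence $\cdots www\cdots$ contains no element of $\mathcal{F}$ as a factor; $W_k$ denotes the set of words of length $k$ in the language. Fix $n\geq 1$ and consider the digraph with vertex set $A^n$ and arcs $(as,sb)$ for $a,b\in A$, $s\in A^{n-1}$, $asb\in W_{n+1}$, the label of $(as,sb)$ being $b$. The de Bruijn graph of span $n$, $G_n$, is a strongly connected component of maximum size of this digraph; vertices are identified with their words (so $u\gamma(u)$ is a word of length $n+1$). The label of a walk is the concatenation of the labels of its arcs. Let $m$ be the vertex of $G_n$ whose word is lexicographically largest. For each vertex $v$, let $e(v)$ be the arc of $G_n$ with tail $v$ having maximum label, and let $\gamma(v)$ be the label of $e(v)$. $T$ is the spanning subgraph of $G_n$ with arc set $\{e(v): v\in V(G_n), v\neq m\}$. *)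

(* Defs.v *)
From HB Require Import structures.
From mathcomp Require Import all_boot all_order.
From Stdlib Require Import Relations.
Set Implicit Arguments. Unset Strict Implicit. Unset Printing Implicit Defensive.
Import Order.TTheory.
Local Open Scope order_scope.

Section DeBruijn.
Context {d : Order.disp_t} {A : finOrderType d}.

Fixpoint lex_le (s t : seq A) : bool :=
  match s, t with
  | [::], _ => true
  | _ :: _, [::] => false
  | a :: s', b :: t' => (a < b) || ((a == b) && lex_le s' t')
  end.

(* u is a factor of the bi-infinite periodic sequence ... w w w ... *)
Definition periodic_factor (u w : seq A) : Prop :=
  exists i : nat, forall j : nat, j < size u ->
    onth u j = onth w ((i + j) %% size w).

Definition in_lang (F : seq A -> Prop) (w : seq A) : Prop :=
  0 < size w /\ forall u, F u -> ~ periodic_factor u w.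

Definition W (F : seq A -> Prop) (k : nat) (w : seq A) : Prop :=
  size w = k /\ in_lang F w.

Variable n : nat.
Notation vtx := (n.-tuple A).

(* arc (as, sb) with label b, where v = as, w = sb, and asb in W_{n+1} *)
Definition arcl (F : seq A -> Prop) (v : vtx) (b : A) (w : vtx) : Prop :=
  val w = rcons (behead v) b /\ W F n.+1 (rcons v b).

Definition arc F (v w : vtx) : Prop := exists b, arcl F v b w.

Definition reach F : relation vtx := clos_refl_trans vtx (arc F).

Definition is_scc F (S : {set vtx}) : Prop :=
  (exists x, x \in S) /\
  (forall x y, x \in S -> y \in S -> reach F x y) /\
  (forall x y, x \in S -> reach F x y -> reach F y x -> y \in S).

Definition is_Gn F (S : {set vtx}) : Prop :=
  is_scc F S /\ forall S', is_scc F S' -> #|S'| <= #|S|.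

Definition is_max_vertex (S : {set vtx}) (m : vtx) : Prop :=
  m \in S /\ forall v, v \in S -> lex_le v m.

Definition Tarc F (S : {set vtx}) (m v w : vtx) : Prop :=
  v \in S /\ v <> m /\ w \in S /\
  exists b, arcl F v b w /\
    forall b' w', w' \in S -> arcl F v b' w' -> b' <= b.

(* a directed cycle of T, given by its (distinct) vertices in cyclic order *)
Definition Tcycle F S m (c : seq vtx) : Prop :=
  c != [::] /\ uniq c /\ forall x, x \in c -> Tarc F S m x (next c x).

(* label of the (unique) arc entering vertex w, as a one-letter word:
   the label of (as, sb) is the last letter b of sb *)
Definition lab_word (w : seq A) : seq A :=
  if w is a :: w' then [:: last a w'] else [::].

(* label of the closed walk x_0 -> x_1 -> ... -> x_{k-1} -> x_0 *)
Definition closed_walk_label (x : seq vtx) : seq A :=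
  flatten [seq lab_word (val y) | y <- rot 1 x].

Definition cycle_label_from (c : seq vtx) (u : vtx) : seq A :=
  closed_walk_label (rot (index (next c u) c) c).

End DeBruijn.

(* Main.v *)
Require Import Defs.
From mathcomp Require Import all_boot all_order.
From mathcomp Require Import zify.
From Stdlib Require Import Relations.
Import Order.TTheory.

Lemma nth_rot1 (T : Type) (x0 : T) (s : seq T) t :
  t < size s -> nth x0 (rot 1 s) t = nth x0 s ((t + 1) %% size s).
Proof.
case: s => [|a s] //= ht; rewrite rot1_cons nth_rcons.
case: ltnP => h.
  by rewrite modn_small ?addn1 //; rewrite ltnS.
have -> : t = size s by apply/eqP; rewrite eqn_leq h -ltnS ht.
by rewrite eqxx addn1 modnn.
Qed.

Lemma pf_rot (d : Order.disp_t) (A : finOrderType d) (u w : seq A) :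
  0 < size w -> periodic_factor u (rot 1 w) -> periodic_factor u w.
Proof.
move=> hw [i Hi]; exists i.+1 => j hj; rewrite Hi // size_rot !onthE map_rot.
rewrite nth_rot1 ?size_map ?ltn_pmod //.
by rewrite modnDml addn1 addSn.
Qed.

Lemma W_rot (d : Order.disp_t) (A : finOrderType d) F k (w : seq A) :
  W F k w -> W F k (rot 1 w).
Proof.
move=> [hs [hp hF]]; split; first by rewrite size_rot.
split; first by rewrite size_rot.
by move=> u /hF hn /(@pf_rot _ _ _ _ hp).
Qed.

Lemma W_iter (d : Order.disp_t) (A : finOrderType d) F k t (w : seq A) :
  W F k w -> W F k (iter t (rot 1) w).
Proof. by elim: t => //= t IH /IH /W_rot. Qed.

Lemma iter_rot1 (T : Type) t (s : seq T) : t <= size s -> iter t (rot 1) s = rot t s.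
Proof.
elim: t => [|t IH] h /=; first by rewrite rot0.
by rewrite IH ?(ltnW h) // -rotD ?add1n.
Qed.

Lemma arc_rot (d : Order.disp_t) (A : finOrderType d) F n (hn : 0 < n)
  (x : seq A) (v w : n.-tuple A) :
  W F n.+1 x -> val v = take n x -> val w = take n (rot 1 x) -> Defs.arc F v w.
Proof.
move=> hx hv hw.
have hs : size x = n.+1 by case: hx.
case: x hs hx hv hw => [|a y] //= [hs] hx hv hw.
case/lastP: y hs hx hv hw => [|q z] hs hx hv hw.
  by exfalso; move: hs hn => /= <-.
exists z; rewrite /arcl /= hv hw.
rewrite size_rcons in hs; subst n.
have e1 : take (size q).+1 (a :: rcons q z) = a :: q by rewrite /= -cats1 take_size_cat.
have e2 : take (size q).+1 (rot 1 (a :: rcons q z)) = rcons q z.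
  by rewrite rot1_cons -{1}(size_rcons q z) -[rcons (rcons q z) a]cats1 take_size_cat.
by rewrite e1 e2.
Qed.

Lemma reach_rot (d : Order.disp_t) (A : finOrderType d) F n (hn : 0 < n) t :
  forall (x : seq A) (v w : n.-tuple A),
  W F n.+1 x -> val v = take n x -> val w = take n (iter t (rot 1) x) -> reach F v w.
Proof.
elim: t => [|t IH] x v w hx hv hw /=.
  have -> : v = w by apply: val_inj; rewrite hv hw.
  exact: rt_refl.
have hs : size (take n (rot 1 x)) == n.
  by case: hx => hs _; rewrite size_take size_rot hs ltnSn.
apply: (@rt_trans _ _ _ (Tuple hs)).
  by apply: rt_step; apply: (@arc_rot d A F n hn x v (Tuple hs) hx hv).
apply: (IH (rot 1 x)) => //; first exact: W_rot.
by rewrite hw iterSr.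
Qed.

Lemma reach_both (d : Order.disp_t) (A : finOrderType d) F n (hn : 0 < n)
  (x w : n.-tuple A) b :
  W F n.+1 (rcons (val x) b) -> val w = rcons (behead (val x)) b ->
  reach F x w /\ reach F w x.
Proof.
move=> hW hw.
have sx : size (val x) = n by rewrite size_tuple.
have e0 : take n (rcons (val x) b) = val x by rewrite -cats1 -{1}sx take_size_cat.
have e1 : take n (rot 1 (rcons (val x) b)) = val w.
  rewrite hw; case: (val x) sx => [|h s'] sx; first by move: hn; rewrite -sx.
  rewrite rcons_cons rot1_cons /= in sx *.
  by rewrite -cats1 -{1}sx -(size_rcons s' b) take_size_cat.
split.
  by apply: (@reach_rot _ _ F n hn 1 _ x w hW) => //=; rewrite e1.
apply: (@reach_rot _ _ F n hn n _ w x (@W_rot _ _ _ _ _ hW)); first by rewrite e1.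
rewrite -iterSr iter_rot1 ?size_rcons ?sx //.
have -> : n.+1 = size (rcons (val x) b) by rewrite size_rcons sx.
by rewrite rot_size e0.
Qed.

Lemma size_iter_rot1 (T : Type) r (s : seq T) : size (iter r (rot 1) s) = size s.
Proof. by elim: r => //= r IH; rewrite size_rot. Qed.

Lemma nth_iter_rot (T : Type) (x0 : T) (s : seq T) r t :
  t < size s -> nth x0 (iter r (rot 1) s) t = nth x0 s ((t + r) %% size s).
Proof.
elim: r t => [|r IH] t ht /=; first by rewrite addn0 modn_small.
rewrite nth_rot1 ?size_iter_rot1 // IH ?ltn_pmod ?(leq_ltn_trans _ ht) //.
by rewrite modnDml addn1 addnS.
Qed.

Lemma next_nth_uniq (T : eqType) (x0 : T) (c : seq T) j :
  uniq c -> j < size c -> next c (nth x0 c j) = nth x0 c (j.+1 %% size c).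
Proof.
move=> hu hj; rewrite next_nth mem_nth // index_uniq //.
case: c hu hj => [|y p] //= hu hj.
case: (ltnP j.+1 (size p).+1) => h.
  by rewrite modn_small //; apply: set_nth_default.
have -> : j = size p by apply/eqP; rewrite eqn_leq -ltnS hj -ltnS h.
by rewrite modnn /= nth_default.
Qed.

Lemma flatten_nseq_per (T : Type) (g : nat -> T) k q :
  (forall t, g (k + t) = g t) ->
  flatten (nseq q [seq g t | t <- iota 0 k]) = [seq g t | t <- iota 0 (q * k)].
Proof.
move=> hg; elim: q => [|q IH] //=.
rewrite IH mulSn iotaD map_cat add0n; congr (_ ++ _).
have -> : iota k (q * k) = map (addn k) (iota 0 (q * k)) by rewrite -iotaDl addn0.
rewrite -map_comp; apply: eq_map => t /=.
by rewrite hg.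
Qed.

Theorem corollary1 (d : Order.disp_t) (A : finOrderType d) (F : seq A -> Prop)
  (n : nat) (hn : 0 < n) (S : {set n.-tuple A}) (m : n.-tuple A)
  (c : seq (n.-tuple A)) :
  is_Gn F S -> is_max_vertex S m -> Tcycle F S m c ->
  (size c %| n.+1) /\
  forall u, u \in c ->
    (val u) ++ lab_word (val (next c u)) =
    flatten (nseq (n.+1 %/ size c) (cycle_label_from c u)).
Proof.
move=> [[_ [_ hcl]] _] _ [cne [cu cT]].
set k := size c.
have k0 : 0 < k by rewrite lt0n size_eq0.
pose a0 := tnth m (Ordinal hn).
pose C i := nth m c (i %% k).
have Cmod : forall i, C (i %% k) = C i by move=> i; rewrite /C modn_mod.
have Cin : forall i, C i \in c by move=> i; apply: mem_nth; rewrite ltn_pmod.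
have Cnext : forall i, next c (C i) = C i.+1.
  move=> i; rewrite /C next_nth_uniq ?ltn_pmod // -/k.
  by rewrite -addn1 modnDml addn1.
pose f j := nth a0 (val (C j.+1)) n.-1.
have sC : forall i, size (val (C i)) = n by move=> i; rewrite size_tuple.
have hT : forall i, [/\ C i \in S, C i.+1 \in S,
    val (C i.+1) = rcons (behead (val (C i))) (f i),
    W F n.+1 (rcons (val (C i)) (f i)) &
    forall b' w', w' \in S -> arcl F (C i) b' w' -> (b' <= f i)%O].
  move=> i; have [hS [_ [hS' [b [[hv hW] hmax]]]]] := cT _ (Cin i).
  rewrite Cnext in hS' hv hW hmax.
  have hb : b = f i.
    rewrite /f hv nth_rcons size_behead sC ltnn eqxx //.
  by subst b; split.
have shift : forall i t, t < n.-1 ->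
    nth a0 (val (C i.+1)) t = nth a0 (val (C i)) t.+1.
  move=> i t ht; have [_ _ hv _ _] := hT i.
  by rewrite hv nth_rcons size_behead sC ht nth_behead.
have Q : forall s, s < n -> forall j, nth a0 (val (C (j + s).+1)) (n.-1 - s) = f j.
  elim=> [|s IH] hs j; first by rewrite addn0 subn0.
  rewrite addnS shift; last by lia.
  have -> : (n.-1 - s.+1).+1 = n.-1 - s by lia.
  by apply: IH; lia.
have hhead : forall j, val (C (j + n)) = f j :: behead (val (C (j + n))).
  move=> j; have := Q n.-1 (ltac:(lia)) j.
  have -> : (j + n.-1).+1 = j + n by lia.
  rewrite subnn; case: (val (C (j + n))) (sC (j + n)) => [|x xs] /=.
    by move=> e; have := hn; rewrite -e.
  by move=> _ ->.
have mono : forall j, (f j <= f (j + n).+1)%O.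
  move=> j; have [hS1 _ _ _ hmax] := hT (j + n).+1.
  have [_ _ hv hW _] := hT (j + n).
  have hW' : W F n.+1 (rcons (val (C (j + n).+1)) (f j)).
    have := @W_rot _ _ _ _ _ hW.
    by rewrite [val (C (j + n))]hhead rcons_cons rot1_cons -hv.
  have hsz : size (rcons (behead (val (C (j + n).+1))) (f j)) == n.
    by rewrite size_rcons size_behead sC prednK.
  have [r1 r2] := @reach_both _ _ F n hn (C (j + n).+1) (Tuple hsz) (f j) hW' erefl.
  have hw'S : Tuple hsz \in S.
    by apply: (hcl _ _ hS1 r1 r2).
  by apply: (hmax _ _ hw'S); split.
have per : forall j, f (j + k) = f j.
  by move=> j; rewrite /f /C -addSn modnDr.
have perq : forall q j, f (j + q * k) = f j.
  elim=> [|q IH] j; first by rewrite addn0.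
  by rewrite mulSnr addnA per IH.
have chain : forall t j, (f j <= f (j + t * n.+1))%O.
  elim=> [|t IH] j; first by rewrite addn0.
  apply: (le_trans (IH j)); have := mono (j + t * n.+1).
  by have -> : (j + t * n.+1 + n).+1 = j + t.+1 * n.+1 by rewrite mulSnr; lia.
have eqn : forall j, f (j + n).+1 = f j.
  move=> j; apply/le_anti; rewrite mono andbT.
  have := chain k.-1 (j + n).+1.
  have -> : (j + n).+1 + k.-1 * n.+1 = j + n.+1 * k.
    by case: (k) k0 => // k' _; rewrite mulnSr /= mulnC; lia.
  by rewrite perq.
have window : forall a t, n <= a -> t < n -> nth a0 (val (C a)) t = f (a - n + t).
  move=> a t ha ht; have := Q (n.-1 - t) (ltac:(lia)) (a - n + t).
  have -> : (a - n + t + (n.-1 - t)).+1 = a by lia.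
  by have -> : n.-1 - (n.-1 - t) = t by lia.
have nk : n <= n * k by rewrite leq_pmulr.
have hdiv : k %| n.+1.
  have e : C (n * k) = C (n * k + n.+1).
    apply: val_inj; apply: (@eq_from_nth _ a0); first by rewrite !sC.
    move=> t; rewrite sC => ht; rewrite !window //; try lia.
    have -> : n * k + n.+1 - n + t = (n * k - n + t + n).+1 by lia.
    by rewrite eqn.
  move: e; rewrite /C modnMl modnMDl => /eqP; rewrite nth_uniq ?ltn_pmod //.
  by move/eqP => e; rewrite /dvdn -e.
split=> // u hu.
have hi : index u c < k by rewrite index_mem.
have eu : u = C (index u c) by rewrite /C modn_small // nth_index.
move: (index u c) hi eu => i hi ->; rewrite Cnext.
have lwt : forall y : n.-tuple A, lab_word (val y) = [:: last a0 (val y)].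
  case=> [[|x xs] e] //=.
  by have := hn; rewrite -(eqP e).
have lastC : forall j, last a0 (val (C j.+1)) = f j.
  by move=> j; rewrite /f -nth_last sC.
have hcl' : cycle_label_from c (C i) = [seq f (i.+1 + t) | t <- iota 0 k].
  rewrite /cycle_label_from /closed_walk_label Cnext /C index_uniq ?ltn_pmod //.
  rewrite -/(C i.+1) (eq_map lwt) flatten_map1.
  rewrite -(@iter_rot1 _ (i.+1 %% k) c) ?(ltnW (ltn_pmod _ k0)) //.
  apply: (@eq_from_nth _ a0).
    by rewrite !size_map size_rot size_iter_rot1 size_iota.
  move=> t; rewrite size_map size_rot size_iter_rot1 -/k => ht.
  rewrite (nth_map m) ?size_rot ?size_iter_rot1 //.
  rewrite (nth_map 0) ?size_iota // nth_iota // add0n.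
  rewrite -/(iter 1 (rot 1) _) nth_iter_rot ?size_iter_rot1 //.
  rewrite nth_iter_rot ?size_iter_rot1 ?ltn_pmod // -/k.
  rewrite modnDml modnDmr -/(C _).
  by have -> : t + 1 + i.+1 = (i.+1 + t).+1 by lia.
rewrite hcl' flatten_nseq_per; last by move=> t; rewrite addnCA addnC per addnC.
rewrite lwt lastC divnK //.
apply: (@eq_from_nth _ a0).
  by rewrite size_cat sC size_map size_iota addn1.
move=> t; rewrite size_cat sC addn1 => ht.
rewrite (nth_map 0) ?size_iota // nth_iota // add0n nth_cat sC.
case: ltnP => h.
  have -> : C i = C (n * k + i) by rewrite /C modnMDl.
  rewrite window //; last by lia.
  rewrite -eqn; have -> : (n * k + i - n + t + n).+1 = i.+1 + t + n * k by lia.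
  by rewrite perq.
have -> : t = n by lia.
by rewrite subnn /= -eqn; congr f; lia.
Qed.
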